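(* Fix integers $CW_{min}\ge 1$, $CW_{max}\ge CW_{min}$ and a retry limit $RL\ge 1$, and set $CW_0=CW_{min}$, $CW_i=\min\{CW_{max},2CW_{i-1}\}$ for $i>0$. Consider a single station operating in discrete virtual slots $t=0,1,2,\dots$ in the idealized regime of infinitely many contending stations, in which every transmission of the station collides. The station's retry counter starts at $0$; it makes its first transmission in a slot chosen uniformly at random from $\{0,1,\dots,CW_0-1\}$. Each transmission collides and increases the retry counter by one; if a transmission in slot $i$ raises the counter to a value $r<RL$, the next transmission takes place in slot $i+K$, where $K$ is uniform on $\{1,\dots,CW_r\}$ and independent of the past; once the counter reaches $RL$ the station makes no further transmissions. Define $a(t,r)$ for integers $t$ and $r\ge 0$ by $a(t,r)=0$ for $t<0$ and, for $t\ge 0$, $$a(t,r)=\begin{cases}\frac{1}{CW_0}, & r=0,\ 0\le t<CW_0,\\ 0, & r=0,\ t\ge CW_0,\\ 0, & r\ge RL,\\ \frac{1}{CW_r}\sum_{i=t-CW_r}^{t-1}a(i,r-1), & 0<r<RL,\end{cases}$$ and $$b(t,r)=\begin{cases}1-\sum_{i=0}^{t-1}a(i,r), & r=0,\\ \sum_{i=0}^{t-1}\bigl(a(i,r-1)-a(i,r)\bigr), & r>0.\end{cases}$$ Let $\Pr(TX\mid t,r)$ denote the probability that the station transmits in slot $t$, conditioned on the event that at the beginning of slot $t$ its retry counter equals $r$ (i.e. it has made exactly $r$ transmissions before slot $t$). Then, whenever $b(t,r)>0$, $$\Pr(TX\mid t,r)=\frac{a(t,r)}{b(t,r)}.$$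
   Context: This models the truncated binary exponential backoff of IEEE 802.11 (EDCA) for one station. Time is measured in virtual slots (the intervals between consecutive backoff-counter changes), so the backoff value drawn after a transmission determines directly the number of slots until the next attempt. The limit of infinitely many stations is interpreted as: the probability that a transmission of the station collides equals the probability that it transmits, i.e. every transmission collides. In this model $a(t,r)$ is the probability that the station transmits in slot $t$ with retry counter $r$, and $b(t,r)$ is the probability that its retry counter equals $r$ at the beginning of slot $t$. *)

(* Defs.v *)
From HB Require Import structures.
From mathcomp Require Import all_boot all_order all_algebra.
Unset Strict Implicit. Unset Printing Implicit Defensive.
Import Order.TTheory GRing.Theory Num.Theory.
Local Open Scope ring_scope.

Fixpoint CW (CWmin CWmax : nat) (i : nat) : nat :=
  match i with
  | 0 => CWmin
  | i'.+1 => minn CWmax (2 * CW CWmin CWmax i')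
  end.

Fixpoint a_fun (R : realFieldType) (CWmin CWmax RL : nat) (r : nat) (t : int) : R :=
  if t < 0 then 0 else
  match r with
  | 0 => if t < (CWmin : int) then (CWmin%:R)^-1 else 0
  | r'.+1 =>
      if (RL <= r'.+1)%N then 0
      else ((CW CWmin CWmax r'.+1)%:R)^-1 *
           \sum_(k < CW CWmin CWmax r'.+1)
              a_fun R CWmin CWmax RL r' (t - (CW CWmin CWmax r'.+1 : int) + (k : int))
              (* i ranges over t - CW_r, ..., t - 1 *)
  end.

Definition b_fun (R : realFieldType) (CWmin CWmax RL : nat) (t r : nat) : R :=
  match r with
  | 0 => 1 - \sum_(i < t) a_fun R CWmin CWmax RL 0 (i : int)
  | r'.+1 => \sum_(i < t) (a_fun R CWmin CWmax RL r' (i : int)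
                           - a_fun R CWmin CWmax RL r'.+1 (i : int))
  end.

(* An outcome lists the RL backoff draws K_0, ..., K_{RL-1}, each in [0, CWmax]. *)
Definition outcome (CWmax RL : nat) := {ffun 'I_RL -> 'I_CWmax.+1}.

Definition valid_draw (CWmin CWmax : nat) (j : nat) (k : nat) : bool :=
  if j == 0%N then (k < CW CWmin CWmax 0)%N
  else (1 <= k <= CW CWmin CWmax j)%N.

Definition weight (R : realFieldType) (CWmin CWmax RL : nat)
    (w : outcome CWmax RL) : R :=
  \prod_(j < RL)
     (if valid_draw CWmin CWmax j (w j) then ((CW CWmin CWmax j)%:R)^-1 else 0).

Definition Pr (R : realFieldType) (CWmin CWmax RL : nat)
    (E : pred (outcome CWmax RL)) : R :=
  \sum_(w | E w) weight R CWmin CWmax RL w.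

(* Slot of the j-th transmission (j = 0..RL-1): K_0 + K_1 + ... + K_j.
   After the RL-th transmission the counter is RL and no more transmissions. *)
Definition tx_slot (CWmax RL : nat) (w : outcome CWmax RL) (j : 'I_RL) : nat :=
  (\sum_(i < RL | (i <= j)%N) (w i : nat))%N.

Definition counter (CWmax RL : nat) (w : outcome CWmax RL) (t : nat) : nat :=
  #|[set j : 'I_RL | (tx_slot CWmax RL w j < t)%N]|.

Definition transmits (CWmax RL : nat) (w : outcome CWmax RL) (t : nat) : bool :=
  [exists j : 'I_RL, tx_slot CWmax RL w j == t].

Definition Pr_TX_given (R : realFieldType) (CWmin CWmax RL : nat) (t r : nat) : R :=
  Pr R CWmin CWmax RL [pred w : outcome CWmax RL | transmits CWmax RL w t && (counter CWmax RL w t == r)]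
  / Pr R CWmin CWmax RL [pred w : outcome CWmax RL | counter CWmax RL w t == r].

(* Main.v *)
Require Import Defs.
From HB Require Import structures.
From mathcomp Require Import all_boot all_order all_algebra.
From mathcomp Require Import zify ring lra.
Import Order.TTheory GRing.Theory Num.Theory.
Local Open Scope ring_scope.

Lemma CW_le m M i : (m <= M)%N -> (CW m M i <= M)%N.
Proof. by case: i => //= i _; rewrite geq_minl. Qed.

Lemma CW_pos m M i : (1 <= m)%N -> (m <= M)%N -> (0 < CW m M i)%N.
Proof. move=> h1 h2; elim: i => //= i IH; rewrite leq_min; apply/andP; split; lia. Qed.

Lemma sum_ind (R : realFieldType) (F : nat -> R) (n m : nat) :
  \sum_(k < m) F k * (n == k)%:R = if (n < m)%N then F n else 0.
Proof.
elim: m => [|m IH]; first by rewrite big_ord0.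
rewrite big_ord_recr /= IH.
case: (ltngtP n m) => [lt|gt|->].
- by rewrite mulr_natr mulr0n addr0 (_ : (n < m.+1)%N) //; lia.
- by rewrite (_ : (n < m.+1)%N = false) ?mulr_natr ?mulr0n ?addr0 //; lia.
- by rewrite ltnSn mulr_natr mulr1n add0r.
Qed.

Lemma sum_eqo (R : realFieldType) (n o m : nat) :
  \sum_(k < m) ((n == k + o)%N%:R : R) = ((o <= n) && (n - o < m))%N%:R.
Proof.
elim: m => [|m IH]; first by rewrite big_ord0 ltn0 andbF.
rewrite big_ord_recr /= IH.
have [->|ne] := eqVneq n (m + o).
  by rewrite (_ : ((o <= m + o) && (m + o - o < m))%N = false); [|lia];
     rewrite (_ : ((o <= m + o) && (m + o - o < m.+1))%N = true); [|lia]; rewrite add0r.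
by rewrite addr0; congr (_%:R); lia.
Qed.

Definition pd (R : realFieldType) m M (i k : nat) : R :=
  if valid_draw m M i k then ((CW m M i)%:R)^-1 else 0.

Definition Upoly (R : realFieldType) m M i : {poly R} :=
  \sum_(k < M.+1) pd R m M i k *: 'X^k.

Lemma Upoly_eq (R : realFieldType) m M i : (1 <= m)%N -> (m <= M)%N ->
  Upoly R m M i = ((CW m M i)%:R)^-1 *: \sum_(k < CW m M i) 'X^(k + (i != 0%N)).
Proof.
move=> h1 h2; apply/polyP => n.
rewrite coef_sum coefZ coef_sum.
under eq_bigr do rewrite coefZ coefXn.
under [X in _ = _ * X]eq_bigr do rewrite coefXn.
rewrite (sum_ind _ (pd R m M i)) sum_eqo /pd /valid_draw.
have hc := @CW_le m M i h2.
case: i hc => [|i] hc /=.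
- case: (ltnP n m) => h.
  + by rewrite (_ : (n < M.+1)%N) ?subn0 ?h ?mulr1 //; lia.
  + by rewrite subn0 [(n < m)%N]ltnNge h mulr0; case: ifP.
- rewrite -[minn M (2 * CW m M i)]/(CW m M i.+1) in hc *.
  case: (boolP ((1 <= n) && (n <= CW m M i.+1))%N) => h.
  + rewrite (_ : (n < M.+1)%N); last by move: h hc => /=; lia.
    by rewrite (_ : ((1 <= n) && (n - 1 < CW m M i.+1))%N = true) ?mulr1 //; move: h => /=; lia.
  + rewrite (_ : ((1 <= n) && (n - 1 < CW m M i.+1))%N = false) ?mulr0; last by move: h => /=; lia.
    by case: ifP.
Qed.

Definition Apoly (R : realFieldType) m M j : {poly R} := \prod_(0 <= i < j.+1) Upoly R m M i.

Lemma a_neg (R : realFieldType) m M L r (t : int) : t < 0 -> a_fun R m M L r t = 0.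
Proof. by move=> h; case: r => [|r] /=; rewrite h. Qed.

Lemma a_S (R : realFieldType) m M L r (t : int) : 0 <= t -> (r.+1 < L)%N ->
  a_fun R m M L r.+1 t = ((CW m M r.+1)%:R)^-1 *
     \sum_(k < CW m M r.+1) a_fun R m M L r (t - (CW m M r.+1 : int) + (k : int)).
Proof. by move=> h1 h2; rewrite /= [t < 0]ltNge h1 leqNgt h2. Qed.

Lemma Apoly_coef (R : realFieldType) m M L j : (1 <= m)%N -> (m <= M)%N ->
  (j < L)%N -> forall n : nat, (Apoly R m M j)`_n = a_fun R m M L j n.
Proof.
move=> h1 h2; elim: j => [|j IH] hj n.
- rewrite /Apoly big_nat1 Upoly_eq // coefZ coef_sum.
  under eq_bigr do rewrite coefXn.
  rewrite sum_eqo /= subn0 !ltz_nat.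
  by case: (n < m)%N; rewrite ?mulr1 ?mulr0.
- have -> : Apoly R m M j.+1 = Apoly R m M j * Upoly R m M j.+1 by rewrite /Apoly big_nat_recr.
  rewrite mulrC Upoly_eq //.
  rewrite -scalerAl mulr_suml coefZ coef_sum.
  under eq_bigr do rewrite coefXnM.
  rewrite a_S //; congr (_ * _).
  set c := CW m M j.+1.
  rewrite [RHS](reindex_inj rev_ord_inj) /=; apply: eq_bigr => k _.
  case: (ltnP n (k + 1)) => hk.
    by rewrite a_neg //; have := ltn_ord k; lia.
  rewrite (_ : (n%:Z - c%:Z + (c - k.+1)%N%:Z) = (n - (k + 1))%N%:Z).
    by rewrite IH //; lia.
  by have := ltn_ord k; lia.
Qed.

Lemma CW_neq0 (R : realFieldType) m M i : (1 <= m)%N -> (m <= M)%N ->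
  ((CW m M i)%:R : R) != 0.
Proof. by move=> h1 h2; rewrite pnatr_eq0 -lt0n CW_pos. Qed.

Lemma sum_pd (R : realFieldType) m M i : (1 <= m)%N -> (m <= M)%N ->
  \sum_(k < M.+1) pd R m M i k = 1.
Proof.
move=> h1 h2.
have -> : \sum_(k < M.+1) pd R m M i k = (Upoly R m M i).[1].
  rewrite /Upoly horner_sum; apply: eq_bigr => k _.
  by rewrite hornerZ hornerXn expr1n mulr1.
rewrite Upoly_eq // hornerZ horner_sum.
under eq_bigr do rewrite hornerXn expr1n.
by rewrite sumr_const card_ord mulVf // CW_neq0.
Qed.

Lemma Pr_total (R : realFieldType) m M L : (1 <= m)%N -> (m <= M)%N ->
  \sum_(w : outcome M L) weight R m M L w = 1.
Proof.
move=> h1 h2.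
transitivity (\prod_(i < L) \sum_(k : 'I_M.+1) pd R m M i k).
  by rewrite bigA_distr_bigA.
by rewrite big1 // => i _; rewrite sum_pd.
Qed.

Definition txn {M L} (w : outcome M L) (k : nat) : nat :=
  (\sum_(i < L | (i <= k)%N) (w i : nat))%N.

Definition G (R : realFieldType) m M L (j : nat) : {poly R} :=
  \sum_(w : outcome M L) weight R m M L w *: 'X^(txn w j).

Lemma G_eq (R : realFieldType) m M L j : (1 <= m)%N -> (m <= M)%N -> (j < L)%N ->
  G R m M L j = Apoly R m M j.
Proof.
move=> h1 h2 hj.
have E : forall w : outcome M L, weight R m M L w *: 'X^(txn w j) =
   \prod_(i < L) (pd R m M i (w i) *: ('X^(if (i <= j)%N then (w i : nat) else 0%N) : {poly R})).
  move=> w; rewrite scaler_prod; congr (_ *: _).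
  rewrite /txn big_mkcond /=.
  by rewrite (big_morph (fun n : nat => ('X^n : {poly R})) (@exprD _ 'X) (expr0 'X)).
rewrite /G (eq_bigr _ (fun w _ => E w)).
transitivity (\prod_(i < L) \sum_(k : 'I_M.+1)
   (pd R m M i k *: ('X^(if (i <= j)%N then (k : nat) else 0%N) : {poly R}))).
  by rewrite bigA_distr_bigA.
rewrite (eq_bigr (fun i : 'I_L => if (i <= j)%N then Upoly R m M i else 1)); last first.
  move=> i _; case: ifP => _; first by [].
  by rewrite -scaler_suml sum_pd // scale1r.
rewrite -big_mkcond /Apoly (big_nat_widen _ _ L) // big_mkord.
by apply: eq_bigl => i /=; rewrite ltnS.
Qed.

Lemma Pr_tx (R : realFieldType) m M L j (t : nat) : (1 <= m)%N -> (m <= M)%N -> (j < L)%N ->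
  \sum_(w : outcome M L) weight R m M L w * (txn w j == t)%:R = a_fun R m M L j t.
Proof.
move=> h1 h2 hj.
rewrite -(Apoly_coef R m M L j h1 h2 hj) -(G_eq R m M L j h1 h2 hj) /G coef_sum; apply: eq_bigr => w _.
by rewrite coefZ coefXn eq_sym.
Qed.

Definition validw m M L (w : outcome M L) : bool :=
  [forall i : 'I_L, valid_draw m M i (w i)].

Lemma weight_invalid (R : realFieldType) m M L (w : outcome M L) :
  ~~ validw m M L w -> weight R m M L w = 0.
Proof.
by move=> /forallPn [i hi]; rewrite /weight (bigD1 i) //= (negbTE hi) mul0r.
Qed.

Lemma Pr_ind (R : realFieldType) m M L (E : pred (outcome M L)) :
  Pr R m M L E = \sum_(w : outcome M L) weight R m M L w * (E w)%:R.
Proof.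
rewrite /Pr big_mkcond; apply: eq_bigr => w _.
by case: (E w); rewrite ?mulr1 ?mulr0.
Qed.

Lemma sum_ext (R : realFieldType) m M L (f g : outcome M L -> R) :
  (forall w, validw m M L w -> f w = g w) ->
  \sum_(w : outcome M L) weight R m M L w * f w =
  \sum_(w : outcome M L) weight R m M L w * g w.
Proof.
move=> H; apply: eq_bigr => w _.
case: (boolP (validw m M L w)) => hv; first by rewrite H.
by rewrite weight_invalid // !mul0r.
Qed.

Lemma txn_mono {m M L} {w : outcome M L} {k k'} : validw m M L w ->
  (k < k')%N -> (k' < L)%N -> (txn w k < txn w k')%N.
Proof.
move=> hv hk hk'.
have hw : (1 <= w (Ordinal hk'))%N.
  have := forallP hv (Ordinal hk'); rewrite /valid_draw /=.
  rewrite (_ : (k' == 0%N) = false); last by lia.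
  by case/andP.
rewrite {2}/txn (bigID (fun i : 'I_L => (i <= k)%N)) /=.
have -> : (\sum_(i < L | (i <= k')%N && (i <= k)%N) (w i : nat))%N = txn w k.
  rewrite /txn; apply: eq_bigl => i /=.
  by apply/idP/idP => [/andP [] // | h]; apply/andP; split => //; lia.
rewrite (bigD1 (Ordinal hk')) /=; last by apply/andP; split; lia.
lia.
Qed.

Definition below {M L} (w : outcome M L) (t k : nat) : bool :=
  (k < L)%N && (txn w k < t)%N.

Lemma counter_sum M L (w : outcome M L) t :
  counter M L w t = (\sum_(k < L) below w t k)%N.
Proof.
rewrite /counter -sum1_card big_mkcond /=; apply: eq_bigr => i _.
by rewrite in_set /below ltn_ord /=; case: ifP.
Qed.

Lemma down_closed (P : nat -> bool) : (forall k, P k.+1 -> P k) ->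
  forall n k, P n -> (k <= n)%N -> P k.
Proof.
move=> hP; elim=> [|n IH] k hn hk.
  by rewrite (_ : k = 0%N) //; lia.
case: (ltnP k n.+1) => h; first by apply: IH; [apply: hP | lia].
by rewrite (_ : k = n.+1) //; lia.
Qed.

Lemma prefix (P : nat -> bool) n : (forall k, P k.+1 -> P k) ->
  (forall k, P k -> (k < n)%N) -> forall k, P k = (k < \sum_(i < n) P i)%N.
Proof.
move=> hP; elim: n => [|n IH] hn k.
  rewrite big_ord0; apply/negbTE/negP => /hn; lia.
rewrite big_ord_recr /=.
case: (boolP (P n)) => hPn.
  have all : forall i, P i = (i <= n)%N.
    move=> i; apply/idP/idP; first by move/hn; lia.
    by move=> hi; have := @down_closed P hP n i hPn hi; apply.
  rewrite (eq_bigr (fun i : 'I_n => 1%N)); last by move=> i _; rewrite all (ltnW (ltn_ord i)).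
  by rewrite sum_nat_const card_ord muln1 all addn1 ltnS.
rewrite addn0; apply: IH => i hi.
have h1 := hn i hi; case: (ltnP i n) => // h2.
have e : i = n by lia.
by move: hi hPn; rewrite e => ->.
Qed.

Lemma counter_char {m M L} {w : outcome M L} t : validw m M L w ->
  forall k, below w t k = (k < counter M L w t)%N.
Proof.
move=> hv; rewrite counter_sum; apply: prefix.
  move=> k; rewrite /below => /andP [h1 h2]; apply/andP; split; first by lia.
  by have := txn_mono hv (ltnSn k) h1; lia.
by move=> k /andP [].
Qed.

Lemma counter_at {m M L} {w : outcome M L} {t j} : validw m M L w ->
  (j < L)%N -> txn w j = t -> counter M L w t = j.
Proof.
move=> hv hj ht.
have hc := counter_char t hv.
have h1 : ~~ (j < counter M L w t)%N by rewrite -hc /below hj ht ltnn.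
case: j hj ht h1 => [|j] hj ht h1; first by lia.
have h2 : below w t j by rewrite /below -ht (txn_mono hv (ltnSn j) hj) andbT; lia.
by rewrite hc in h2; lia.
Qed.

Lemma tx_event m M L (w : outcome M L) t r : validw m M L w ->
  (transmits M L w t && (counter M L w t == r)) = (r < L)%N && (txn w r == t).
Proof.
move=> hv; apply/idP/idP.
  case/andP => /existsP [j /eqP hj] /eqP hc.
  have := counter_at hv (ltn_ord j) hj; rewrite hc => ->.
  by rewrite ltn_ord; apply/eqP.
case/andP => hr /eqP ht; apply/andP; split.
  by apply/existsP; exists (Ordinal hr); apply/eqP.
by rewrite (counter_at hv hr ht).
Qed.

Lemma a_big (R : realFieldType) m M L r (t : int) : (1 <= L)%N -> (L <= r)%N ->
  a_fun R m M L r t = 0.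
Proof.
move=> hL hr; case: r hr => [|r] hr; first by lia.
by rewrite /= hr; case: ifP.
Qed.

Lemma ind_lt (R : realFieldType) (x t : nat) :
  ((x < t)%N%:R : R) = \sum_(i < t) ((x == i)%:R : R).
Proof.
have := sum_ind R (fun _ => 1) x t.
under eq_bigr do rewrite mul1r.
by move=> ->; case: ifP.
Qed.

Lemma Pr_below (R : realFieldType) m M L k (t : nat) :
  (1 <= m)%N -> (m <= M)%N -> (1 <= L)%N ->
  \sum_(w : outcome M L) weight R m M L w * (below w t k)%:R =
  \sum_(i < t) a_fun R m M L k i.
Proof.
move=> h1 h2 hL.
case: (ltnP k L) => hk.
  under eq_bigr do rewrite /below hk /= ind_lt mulr_sumr.
  rewrite exchange_big /=; apply: eq_bigr => i _.
  by rewrite -(Pr_tx R m M L k i h1 h2 hk).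
rewrite big1; last by move=> w _; rewrite /below (_ : (k < L)%N = false) ?mulr0 //; lia.
by rewrite big1 // => i _; rewrite a_big.
Qed.

Theorem lemma1 (R : realFieldType) (CWmin CWmax RL : nat) :
  (1 <= CWmin)%N -> (CWmin <= CWmax)%N -> (1 <= RL)%N ->
  forall t r : nat,
    0 < b_fun R CWmin CWmax RL t r ->
    Pr_TX_given R CWmin CWmax RL t r
    = a_fun R CWmin CWmax RL r (t : int) / b_fun R CWmin CWmax RL t r.
Proof.
move=> h1 h2 hL t r _.
rewrite /Pr_TX_given; congr (_ / _).
  rewrite Pr_ind (@sum_ext R CWmin CWmax RL _ (fun w => ((r < RL)%N && (txn w r == t))%:R)); last first.
    by move=> w hv /=; rewrite (tx_event CWmin CWmax RL w t r hv).
  case: (ltnP r RL) => hr /=.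
    exact: Pr_tx.
  rewrite a_big // big1 // => w _; by rewrite mulr0.
rewrite Pr_ind.
case: r => [|r].
  rewrite (@sum_ext R CWmin CWmax RL _ (fun w => 1 - (below w t 0)%:R)); last first.
    move=> w hv /=; rewrite (counter_char t hv 0).
    by case: (counter CWmax RL w t) => [|c] /=; rewrite ?subr0 ?subrr.
  under eq_bigr do rewrite mulrBr mulr1.
  by rewrite sumrB Pr_total // Pr_below.
rewrite (@sum_ext R CWmin CWmax RL _ (fun w => (below w t r)%:R - (below w t r.+1)%:R)); last first.
  move=> w hv /=; rewrite (counter_char t hv r) (counter_char t hv r.+1).
  move: (counter CWmax RL w t) => c.
  case: (ltngtP c r.+1) => h.
  - by rewrite /= ?subrr ?subr0 ?mulr0n.
  - by rewrite /= ?subrr ?subr0 ?mulr0n.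
  - by rewrite /= ?subrr ?subr0 ?mulr0n.
under eq_bigr do rewrite mulrBr.
by rewrite sumrB !Pr_below // /b_fun sumrB.
Qed.
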